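(* Let $X$ be a dendric shift over $\mathcal{A}_3=\{1,2,3\}$, let $\sigma\in\mathrm{DP}(X)$ and let $Y$ be the image of $X$ under $\sigma$. If $\mathcal{C}^-(Y)=\emptyset$, then $\mathcal{C}^-(X)=\emptyset$ and $\sigma$ is left-invariant. Respectively, if $\mathcal{C}^+(Y)=\emptyset$, then $\mathcal{C}^+(X)=\emptyset$ and $\sigma$ is right-invariant.
   Context: A shift space over $\mathcal{A}$ is a closed shift-invariant $X\subseteq\mathcal{A}^{\mathbb{Z}}$ in which all letters occur, with factor set $\mathcal{L}(X)$. For $w\in\mathcal{L}(X)$, $\mathcal{E}_X(w)$ is the bipartite graph with left vertices $a^-$ ($aw\in\mathcal{L}(X)$), right vertices $b^+$ ($wb\in\mathcal{L}(X)$), edges $\{a^-,b^+\}$ ($awb\in\mathcal{L}(X)$); $w$ is bispecial if it has at least two left and two right vertices, dendric if $\mathcal{E}_X(w)$ is a tree; $X$ is dendric if all factors are. $\mathcal{C}^-_X(w)$ (resp. $\mathcal{C}^+_X(w)$): letters $a$ such that removing $a^-$ (resp. $a^+$) and the resulting isolated vertices from $\mathcal{E}_X(w)$ leaves a disconnected graph; $\mathcal{C}^\pm(X)=\bigcup_{w\in\mathcal{L}(X)}\mathcal{C}^\pm_X(w)$. $\mathcal{S}_3=\{\alpha,\beta,\gamma,\eta\}\cup\{\delta^{(k)},\zeta^{(k)}:k\ge1\}$ with $\alpha:1\mapsto1,2\mapsto12,3\mapsto13$; $\beta:1\mapsto1,2\mapsto12,3\mapsto132$; $\gamma:1\mapsto1,2\mapsto12,3\mapsto123$;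 $\delta^{(k)}:1\mapsto1,2\mapsto123^k,3\mapsto123^{k+1}$; $\zeta^{(k)}:1\mapsto13^k,2\mapsto12,3\mapsto13^{k+1}$; $\eta:1\mapsto13,2\mapsto12,3\mapsto123$. $\sigma$ is left-invariant (right-invariant) if all longest common suffixes (prefixes) of $\sigma(a_1),\sigma(a_2)$, $a_1\ne a_2$, coincide. Image of $X$: $Y=\{S^k\sigma(x):x\in X,0\le k<|\sigma(x_0)|\}$. For non-empty $u\in\mathcal{L}(Y)$ containing $1$ there is a unique triple $(s,v,p)$, $v\in\mathcal{L}(X)$, $u=s\sigma(v)p$, with $s$ a proper suffix of $\sigma(a)$ and $p$ a non-empty prefix of $\sigma(b)$ for some $a,b$ with $avb\in\mathcal{L}(X)$; $u$ is an extended image of $v$. $\mathrm{DP}(X)$: set of $\sigma\in\mathcal{S}_3$ such that every bispecial extended image (in $Y$) of every $v\in\mathcal{L}(X)$ is dendric. *)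

(* Defs.v *)
From mathcomp Require Import all_boot all_order all_algebra.
Set Implicit Arguments. Unset Strict Implicit. Unset Printing Implicit Defensive.
Import Order.TTheory GRing.Theory Num.Theory.

(* The alphabet A_3 = {1,2,3}: letter i+1 is represented by the ordinal i. *)
Notation letter := 'I_3.
Definition l1 : letter := @Ordinal 3 0 erefl.
Definition l2 : letter := @Ordinal 3 1 erefl.
Definition l3 : letter := @Ordinal 3 2 erefl.

Definition config := int -> letter.
Definition subshift := config -> Prop.

Definition factor_at (x : config) (i : int) (n : nat) : seq letter :=
  [seq x (i + (k%:Z))%R | k <- iota 0 n].

Definition lang (X : subshift) (w : seq letter) : Prop :=
  exists x i, X x /\ w = factor_at x i (size w).

(* closedness in the product (discrete) topology: a point all of whose
   central windows are matched by points of X lies in X *)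
Definition closed_sub (X : subshift) : Prop :=
  forall x : config,
    (forall n : nat, exists y, X y /\
       forall i : int, (- (n%:Z) <= i <= n%:Z)%R -> y i = x i) -> X x.

Definition shift (x : config) : config := fun i => x (i + 1)%R.

Definition shift_space (X : subshift) : Prop :=
  [/\ closed_sub X,
      (forall x, X x <-> X (shift x)) &
      (forall a : letter, exists x, X x /\ exists i, x i = a)].

Fixpoint walk (V : Type) (e : V -> V -> Prop) (x : V) (p : seq V) : Prop :=
  match p with [::] => True | y :: p' => e x y /\ walk e y p' end.

Definition connected_in (V : Type) (P : V -> Prop) (e : V -> V -> Prop) :=
  forall u v, P u -> P v -> exists p, walk e u p /\ last u p = v.

Definition acyclic (V : eqType) (e : V -> V -> Prop) :=
  forall (x : V) (c' : seq V),
    uniq (x :: c') -> 3 <= size (x :: c') -> ~ walk e x (rcons c' x).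

Definition is_tree (V : eqType) (P : V -> Prop) (e : V -> V -> Prop) :=
  connected_in P e /\ acyclic e.

(* vertices: inl a = a^-, inr b = b^+ *)
Definition vertex := (letter + letter)%type.

Definition ext_vert (X : subshift) (w : seq letter) (v : vertex) : Prop :=
  match v with
  | inl a => lang X (a :: w)
  | inr b => lang X (rcons w b)
  end.

Definition ext_edge (X : subshift) (w : seq letter) (u v : vertex) : Prop :=
  match u, v with
  | inl a, inr b => lang X (a :: rcons w b)
  | inr b, inl a => lang X (a :: rcons w b)
  | _, _ => False
  end.

Definition dendric_word (X : subshift) (w : seq letter) : Prop :=
  is_tree (ext_vert X w) (ext_edge X w).

Definition dendric_shift (X : subshift) : Prop :=
  forall w, lang X w -> dendric_word X w.

Definition bispecial (X : subshift) (w : seq letter) : Prop :=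
  exists a a' b b' : letter,
    [/\ a != a', b != b',
        lang X (a :: w) /\ lang X (a' :: w) &
        lang X (rcons w b) /\ lang X (rcons w b')].

(* graph obtained by removing vertex r and the resulting isolated vertices *)
Definition rm_edge (X : subshift) (w : seq letter) (r : vertex) (u v : vertex) :=
  ext_edge X w u v /\ u != r /\ v != r.
Definition rm_vert (X : subshift) (w : seq letter) (r : vertex) (v : vertex) :=
  v != r /\ exists u, rm_edge X w r v u.
Definition disconnected_rm (X : subshift) (w : seq letter) (r : vertex) :=
  exists u v, [/\ rm_vert X w r u, rm_vert X w r v &
                  ~ exists p, walk (rm_edge X w r) u p /\ last u p = v].

Definition Cminus_w (X : subshift) (w : seq letter) (a : letter) : Prop :=
  ext_vert X w (inl a) /\ disconnected_rm X w (inl a).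
Definition Cplus_w (X : subshift) (w : seq letter) (a : letter) : Prop :=
  ext_vert X w (inr a) /\ disconnected_rm X w (inr a).

Definition Cminus_empty (X : subshift) : Prop :=
  forall w a, lang X w -> ~ Cminus_w X w a.
Definition Cplus_empty (X : subshift) : Prop :=
  forall w a, lang X w -> ~ Cplus_w X w a.

Definition morph := letter -> seq letter.

Definition mk3 (u1 u2 u3 : seq letter) : morph :=
  fun a => if a == l1 then u1 else if a == l2 then u2 else u3.

Definition s_alpha : morph := mk3 [:: l1] [:: l1; l2] [:: l1; l3].
Definition s_beta  : morph := mk3 [:: l1] [:: l1; l2] [:: l1; l3; l2].
Definition s_gamma : morph := mk3 [:: l1] [:: l1; l2] [:: l1; l2; l3].
Definition s_delta (k : nat) : morph :=
  mk3 [:: l1] ([:: l1; l2] ++ nseq k l3) ([:: l1; l2] ++ nseq k.+1 l3).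
Definition s_zeta (k : nat) : morph :=
  mk3 (l1 :: nseq k l3) [:: l1; l2] (l1 :: nseq k.+1 l3).
Definition s_eta   : morph := mk3 [:: l1; l3] [:: l1; l2] [:: l1; l2; l3].

Definition in_S3 (s : morph) : Prop :=
  s =1 s_alpha \/ s =1 s_beta \/ s =1 s_gamma \/ s =1 s_eta \/
  (exists k, 0 < k /\ s =1 s_delta k) \/ (exists k, 0 < k /\ s =1 s_zeta k).

Fixpoint lcp (u v : seq letter) : seq letter :=
  match u, v with
  | x :: u', y :: v' => if x == y then x :: lcp u' v' else [::]
  | _, _ => [::]
  end.
Definition lcs (u v : seq letter) : seq letter := rev (lcp (rev u) (rev v)).

Definition left_invariant (s : morph) : Prop :=
  forall a1 a2 b1 b2 : letter, a1 != a2 -> b1 != b2 ->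
    lcs (s a1) (s a2) = lcs (s b1) (s b2).
Definition right_invariant (s : morph) : Prop :=
  forall a1 a2 b1 b2 : letter, a1 != a2 -> b1 != b2 ->
    lcp (s a1) (s a2) = lcp (s b1) (s b2).

Definition subst_word (s : morph) (v : seq letter) : seq letter :=
  flatten (map s v).

(* sigma(x) for a bi-infinite x, with sigma(x_0) starting at position 0
   (meaningful for non-erasing sigma, as all morphisms of S_3 are) *)
Definition subst_conf (s : morph) (x : config) : config :=
  fun i => match i with
  | Posz n => nth l1 (flatten [seq s (x (Posz k)) | k <- iota 0 n.+1]) n
  | Negz m =>
      let w := flatten [seq s (x (Posz k - Posz m.+1)%R) | k <- iota 0 m.+1] in
      nth l1 w (size w - m.+1)
  end.

Definition image_shift (s : morph) (X : subshift) : subshift :=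
  fun y => exists x (k : nat),
    [/\ X x, k < size (s (x 0%R)) &
        forall i : int, y i = subst_conf s x (i + k%:Z)%R].

Definition ext_image (s : morph) (X : subshift) (u v : seq letter) : Prop :=
  [/\ lang (image_shift s X) u, u != [::], l1 \in u &
      exists (a b : letter) (sf p : seq letter),
        [/\ lang X (a :: rcons v b),
            suffix sf (s a) && (size sf < size (s a)),
            prefix p (s b) && (p != [::]) &
            u = sf ++ subst_word s v ++ p]].

Definition DP (X : subshift) (s : morph) : Prop :=
  in_S3 s /\
  forall v u, lang X v -> ext_image s X u v ->
    bispecial (image_shift s X) u -> dendric_word (image_shift s X) u.

(* Main.v *)
Require Import Defs.
From mathcomp Require Import all_boot all_order all_algebra.
From mathcomp Require Import zify.
From Stdlib Require Import FunctionalExtensionality Classical.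
Set Implicit Arguments. Unset Strict Implicit. Unset Printing Implicit Defensive.

Lemma letters3 (c a1 a2 a : letter) :
  a1 != c -> a2 != c -> a1 != a2 -> a != c -> a = a1 \/ a = a2.
Proof.
case: c => [[|[|[|//]]] ?]; case: a1 => [[|[|[|//]]] ?]; case: a2 => [[|[|[|//]]] ?];
case: a => [[|[|[|//]]] ?] //=; try (by left; apply: val_inj); try (by right; apply: val_inj).
Qed.

Section Graph.
Variables (Z : subshift) (w : seq letter).
Definition E a b := lang Z (a :: rcons w b).

Lemma walk_cat (e : vertex -> vertex -> Prop) x p q :
  walk e x (p ++ q) <-> walk e x p /\ walk e (last x p) q.
Proof.
elim: p x => [|y p IH] x /=; first by split=> // [[]].
rewrite IH; tauto.
Qed.

Definition reach r u v := exists p, walk (rm_edge Z w r) u p /\ last u p = v.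

Lemma reach_refl r u : reach r u u.
Proof. by exists [::]. Qed.

Lemma reach_trans r u v t : reach r u v -> reach r v t -> reach r u t.
Proof.
move=> [p [Hp Hl]] [q [Hq Hl']]; exists (p ++ q); rewrite walk_cat last_cat Hl.
by subst.
Qed.

Lemma reach_edge r u v : rm_edge Z w r u v -> reach r u v.
Proof. by move=> H; exists [:: v]. Qed.

Lemma crit_minus c a1 a2 : a1 != c -> a2 != c -> a1 != a2 ->
  (exists b, E a1 b) -> (exists b, E a2 b) ->
  (forall b, E a1 b -> E a2 b -> False) -> disconnected_rm Z w (inl c).
Proof.
move=> h1 h2 h12 [b1 e1] [b2 e2] hd.
exists (inl a1), (inl a2); split.
- by split=> //; exists (inr b1); split.
- by split=> //; exists (inr b2); split.
move=> [p [Hw Hl]].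
pose S v := (v = inl a1) \/ (exists b, v = inr b /\ E a1 b).
have key : forall p x, S x -> walk (rm_edge Z w (inl c)) x p -> S (last x p).
  elim=> [|y q IH] x //= Sx [[Exy [Nx Ny]] Wq]; apply: IH Wq.
  move: Exy; case: Sx => [->|[b [-> Eb]]] Exy.
    by case: y Exy Ny => // b Eb _; right; exists b.
  case: y Exy Ny => // a Ea Na.
  have Nac : a != c by [].
  case: (letters3 h1 h2 h12 Nac) => Ha; first by left; rewrite Ha.
  by rewrite Ha in Ea; case: (hd b Eb Ea).
have := key p _ (or_introl erefl) Hw; rewrite Hl.
case=> [[E12]|[b [//]]]; by rewrite E12 eqxx in h12.
Qed.

Lemma crit_plus c b1 b2 : b1 != c -> b2 != c -> b1 != b2 ->
  (exists a, E a b1) -> (exists a, E a b2) ->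
  (forall a, E a b1 -> E a b2 -> False) -> disconnected_rm Z w (inr c).
Proof.
move=> h1 h2 h12 [a1 e1] [a2 e2] hd.
exists (inr b1), (inr b2); split.
- by split=> //; exists (inl a1); split.
- by split=> //; exists (inl a2); split.
move=> [p [Hw Hl]].
pose S v := (v = inr b1) \/ (exists a, v = inl a /\ E a b1).
have key : forall p x, S x -> walk (rm_edge Z w (inr c)) x p -> S (last x p).
  elim=> [|y q IH] x //= Sx [[Exy [Nx Ny]] Wq]; apply: IH Wq.
  move: Exy; case: Sx => [->|[a [-> Ea]]] Exy.
    by case: y Exy Ny => // a Ea' _; right; exists a.
  case: y Exy Ny => // b Eb Nb.
  have Nbc : b != c by [].
  case: (letters3 h1 h2 h12 Nbc) => Hb; first by left; rewrite Hb.
  by rewrite Hb in Eb; case: (hd a Ea Eb).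
have := key p _ (or_introl erefl) Hw; rewrite Hl.
case=> [[E12]|[b [//]]]; by rewrite E12 eqxx in h12.
Qed.

Lemma vert_left c u : rm_vert Z w (inl c) u ->
  exists a, [/\ a != c, (exists b, E a b), reach (inl c) u (inl a) & reach (inl c) (inl a) u].
Proof.
case=> Nu [v [Euv [_ Nv]]].
case: u Nu Euv => [a|b] Nu Euv.
  by exists a; split=> //; [case: v Euv Nv => // b; exists b| exact: reach_refl|exact: reach_refl].
case: v Euv Nv => // a Eab Na; exists a; split => //; first by exists b.
  by apply: reach_edge.
by apply: reach_edge; split.
Qed.

Lemma vert_right c u : rm_vert Z w (inr c) u ->
  exists b, [/\ b != c, (exists a, E a b), reach (inr c) u (inr b) & reach (inr c) (inr b) u].
Proof.
case=> Nu [v [Euv [_ Nv]]].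
case: u Nu Euv => [a|b] Nu Euv; last first.
  by exists b; split=> //; [case: v Euv Nv => // a; exists a| exact: reach_refl|exact: reach_refl].
case: v Euv Nv => // b Eab Nb; exists b; split => //; first by exists a.
  by apply: reach_edge.
by apply: reach_edge; split.
Qed.

Lemma crit_minus_inv c : disconnected_rm Z w (inl c) ->
  exists a1 a2, [/\ a1 != c, a2 != c, a1 != a2,
     (exists b, E a1 b) /\ (exists b, E a2 b) & forall b, E a1 b -> E a2 b -> False].
Proof.
case=> u [v [Hu Hv Hn]].
case: (vert_left Hu) => a1 [N1 B1 R1 R1'].
case: (vert_left Hv) => a2 [N2 B2 R2 R2'].
exists a1, a2; split=> //.
  by apply/eqP=> E12; subst; apply: Hn; apply: reach_trans R1 R2'.
move=> b Eb1 Eb2; apply: Hn.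
apply: reach_trans R1 _; apply: reach_trans _ R2'.
apply: (@reach_trans _ _ (inr b)); apply: reach_edge; by split.
Qed.

Lemma crit_plus_inv c : disconnected_rm Z w (inr c) ->
  exists b1 b2, [/\ b1 != c, b2 != c, b1 != b2,
     (exists a, E a b1) /\ (exists a, E a b2) & forall a, E a b1 -> E a b2 -> False].
Proof.
case=> u [v [Hu Hv Hn]].
case: (vert_right Hu) => a1 [N1 B1 R1 R1'].
case: (vert_right Hv) => a2 [N2 B2 R2 R2'].
exists a1, a2; split=> //.
  by apply/eqP=> E12; subst; apply: Hn; apply: reach_trans R1 R2'.
move=> b Eb1 Eb2; apply: Hn.
apply: reach_trans R1 _; apply: reach_trans _ R2'.
apply: (@reach_trans _ _ (inl b)); apply: reach_edge; by split.
Qed.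

End Graph.

Lemma size_factor_at x i n : size (factor_at x i n) = n.
Proof. by rewrite /factor_at size_map size_iota. Qed.

Lemma factor_at_cat x i a b :
  factor_at x i (a + b) = factor_at x i a ++ factor_at x (i + a%:Z)%R b.
Proof.
rewrite /factor_at iotaD map_cat add0n; congr (_ ++ _).
rewrite -[a in iota a]addn0 iotaDl -map_comp; apply: eq_map => t /=.
by congr x; rewrite PoszD GRing.addrA.
Qed.

Lemma cat_split (T : eqType) (p q A B : seq T) :
  size p = size A -> p ++ q = A ++ B -> p = A /\ q = B.
Proof. by move=> Hs /eqP; rewrite eqseq_cat // => /andP [/eqP -> /eqP ->]; split. Qed.

Lemma lang_infix X p u r : lang X (p ++ u ++ r) -> lang X u.
Proof.
move=> [x [i [Xx E]]]; exists x, (i + (size p)%:Z)%R; split=> //.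
move: E; rewrite !size_cat !factor_at_cat => E.
have [_ E2] := cat_split (esym (size_factor_at _ _ _)) E.
by have [E3 _] := cat_split (esym (size_factor_at _ _ _)) E2.
Qed.

Lemma lang_ext_r X w : lang X w -> exists b, lang X (rcons w b).
Proof.
move=> [x [i [Xx E]]]; exists (x (i + (size w)%:Z)%R); exists x, i; split=> //.
by rewrite size_rcons -[(size w).+1]addn1 factor_at_cat -E /factor_at /= GRing.addr0 cats1.
Qed.

Lemma lang_ext_l X w : lang X w -> exists a, lang X (a :: w).
Proof.
move=> [x [i [Xx E]]]; exists (x (i - 1)%R); exists x, (i - 1)%R; split=> //.
rewrite /= -[(size w).+1]add1n factor_at_cat GRing.subrK -E /factor_at /=.
by rewrite GRing.addr0.
Qed.

Lemma lang_pre X p u : lang X (p ++ u) -> lang X p.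
Proof. by move=> H; apply: (@lang_infix X [::] p u). Qed.
Lemma lang_suf X p u : lang X (p ++ u) -> lang X u.
Proof. by move=> H; apply: (@lang_infix X p u [::]); rewrite cats0. Qed.

Lemma lang_letter X a : shift_space X -> lang X [:: a].
Proof.
case=> _ _ H; case: (H a) => x [Xx [i Hi]]; exists x, i; split=> //.
by rewrite /factor_at /= GRing.addr0 Hi.
Qed.

Lemma Xsh X : (forall x, X x <-> X (shift x)) ->
  forall x (i : int), X x -> X (fun j => x (j + i)%R).
Proof.
move=> HS x i Xx.
have Hp : forall n : nat, X (fun j => x (j + n%:Z)%R).
  elim=> [|n IH].
    have -> : (fun j => x (j + 0%:Z)%R) = x by apply: functional_extensionality => j; rewrite GRing.addr0.
    done.
  move/HS: IH; rewrite /shift.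
  have -> : (fun i0 : int => x (i0 + 1 + n%:Z)%R) = (fun j => x (j + n.+1%:Z)%R) => //.
  by apply: functional_extensionality => j; congr x; lia.
have Hn : forall n : nat, X (fun j => x (j - n%:Z)%R).
  elim=> [|n IH].
    have -> : (fun j => x (j - 0%:Z)%R) = x by apply: functional_extensionality => j; rewrite GRing.subr0.
    done.
  apply/HS; rewrite /shift.
  have -> : (fun i0 : int => x (i0 + 1 - n.+1%:Z)%R) = (fun j => x (j - n%:Z)%R) => //.
  by apply: functional_extensionality => j; congr x; lia.
case: i => n; first exact: Hp.
have -> : (fun j => x (j + Negz n)%R) = (fun j => x (j - n.+1%:Z)%R) => //.
Qed.

Section Subst.
Variable s : morph.
Hypothesis Hne : forall a, 0 < size (s a).

Lemma size_sigma v : size v <= size (subst_word s v).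
Proof.
elim: v => //= a v IH; rewrite /subst_word /= size_cat.
have := Hne a; rewrite /subst_word in IH; lia.
Qed.

Lemma subst_cat v1 v2 : subst_word s (v1 ++ v2) = subst_word s v1 ++ subst_word s v2.
Proof. by rewrite /subst_word map_cat flatten_cat. Qed.

Definition F (x : config) n := flatten [seq s (x (Posz k)) | k <- iota 0 n].
Definition Sfx (x : config) n := flatten [seq s (x (Posz k - Posz n)%R) | k <- iota 0 n].

Lemma size_F x n : n <= size (F x n).
Proof.
have -> : F x n = subst_word s (map (fun k => x (Posz k)) (iota 0 n)) by rewrite /F /subst_word -map_comp.
by have := size_sigma (map (fun k => x (Posz k)) (iota 0 n)); rewrite size_map size_iota.
Qed.

Lemma size_Sfx x n : n <= size (Sfx x n).
Proof.
have -> : Sfx x n = subst_word s (map (fun k => x (Posz k - Posz n)%R) (iota 0 n)) by rewrite /Sfx /subst_word -map_comp.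
by have := size_sigma (map (fun k => x (Posz k - Posz n)%R) (iota 0 n)); rewrite size_map size_iota.
Qed.

Lemma F_split x a b : exists G, F x (a + b) = F x a ++ G.
Proof. by rewrite /F iotaD map_cat flatten_cat; eexists. Qed.

Lemma Sfx_split x d n : exists G, Sfx x (d + n) = G ++ Sfx x n.
Proof.
rewrite /Sfx iotaD map_cat flatten_cat; eexists; congr (_ ++ _).
rewrite add0n -[d in iota d]addn0 iotaDl -map_comp; congr flatten; apply: eq_map => k /=.
by congr s; congr x; lia.
Qed.

Lemma KLpos x N t : t < size (F x N) -> subst_conf s x (Posz t) = nth l1 (F x N) t.
Proof.
move=> Ht; rewrite /subst_conf -/(F x t.+1).
case: (leqP t.+1 N) => HN.
  rewrite -(subnKC HN); case: (F_split x t.+1 (N - t.+1)) => G ->.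
  by rewrite nth_cat (leq_trans _ (size_F x t.+1)).
have HN' : N <= t.+1 by lia.
rewrite -(subnKC HN'); case: (F_split x N (t.+1 - N)) => G ->.
by rewrite nth_cat Ht.
Qed.

Lemma nth_suffix (L1 G L2 : seq letter) q : L1 = G ++ L2 -> 0 < q <= size L2 ->
  nth l1 L1 (size L1 - q) = nth l1 L2 (size L2 - q).
Proof.
move=> -> Hq; rewrite nth_cat size_cat.
have -> : (size G + size L2 - q < size G) = false by lia.
congr nth; lia.
Qed.

Lemma KLneg x m t : t < size (Sfx x m) ->
  subst_conf s x (Negz t) = nth l1 (Sfx x m) (size (Sfx x m) - t.+1).
Proof.
move=> Ht; rewrite /subst_conf -/(Sfx x t.+1).
case: (leqP t.+1 m) => Hm.
  rewrite -(subnK Hm); case: (Sfx_split x (m - t.+1) t.+1) => G E.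
  symmetry; apply: nth_suffix; first exact: E.
  by have := size_Sfx x t.+1; lia.
have Hm' : m <= t.+1 by lia.
rewrite -(subnK Hm'); case: (Sfx_split x (t.+1 - m) m) => G E.
apply: nth_suffix; first exact: E.
lia.
Qed.

Lemma F_factor x N : subst_word s (factor_at x 0 N) = F x N.
Proof.
rewrite /subst_word /factor_at /F -map_comp; congr flatten; apply: eq_map => k /=; try by rewrite GRing.add0r.
Qed.

Lemma Sfx_factor x m : subst_word s (factor_at x (- (Posz m))%R m) = Sfx x m.
Proof.
rewrite /subst_word /factor_at /Sfx -map_comp; congr flatten; apply: eq_map => k /=; try by rewrite GRing.addrC.
Qed.

Variable X : subshift.
Notation Y := (image_shift s X).

Lemma LY1 u : lang Y u -> exists v, lang X v /\ exists p r, subst_word s v = p ++ u ++ r.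
Proof.
move=> [y [i [[x [k [Xx Hk Hy]]] Hu]]].
set n := size u in Hu.
set j0 := (i + k%:Z)%R.
set m := absz j0.
set N := (m + n)%N.
exists (factor_at x (- (Posz m))%R m ++ factor_at x 0 N); split.
  exists x, (- (Posz m))%R; split => //.
  by rewrite size_cat !size_factor_at factor_at_cat GRing.addNr.
rewrite subst_cat F_factor Sfx_factor.
set A := Sfx x m; set B := F x N; set L := A ++ B.
set P := size A.
have HA : m <= P := size_Sfx x m.
have HB : N <= size B := size_F x N.
have Hj0 : (- Posz m <= j0)%R by rewrite /m; lia.
set e := absz (Posz P + j0)%R.
have He : Posz e = (Posz P + j0)%R by rewrite /e; lia.
have HL : size L = P + size B by rewrite size_cat.
have Hen : e + n <= size L by lia.
suff Hu' : u = take n (drop e L).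
  exists (take e L), (drop (e + n) L).
  by rewrite Hu' (addnC e n) -drop_drop !cat_take_drop.
apply: (@eq_from_nth _ l1).
  rewrite size_takel //; rewrite size_drop; lia.
move=> t; rewrite -/n => Ht.
rewrite nth_take // nth_drop Hu /factor_at (nth_map 0%N) ?size_iota // nth_iota // add0n.
rewrite Hy.
case Ej: (i + Posz t + Posz k)%R => [q|q].
  rewrite (@KLpos x N q); last by rewrite -/B; lia.
  rewrite /L nth_cat.
  have -> : (e + t < P) = false by lia.
  congr nth; lia.
rewrite (@KLneg x m q); last by rewrite -/A -/P; lia.
rewrite /L nth_cat.
have -> : (e + t < P) = true by lia.
congr nth; rewrite -/A -/P; lia.
Qed.

Hypothesis HS : forall x, X x <-> X (shift x).

Lemma LY2 v p u r : lang X v -> subst_word s v = p ++ u ++ r -> lang Y u.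
Proof.
move=> [x [i [Xx Hv]]] Hs.
set x' := fun j => x (j + i)%R.
have Xx' : X x' by apply: (Xsh HS).
have Hv' : v = factor_at x' 0 (size v).
  rewrite {1}Hv /factor_at; apply: eq_map => k /=.
  by rewrite /x' GRing.add0r GRing.addrC.
exists (subst_conf s x'), (Posz (size p)); split.
  exists x', 0%N; split=> //; last by move=> j; rewrite GRing.addr0.
apply: (@eq_from_nth _ l1); first by rewrite size_factor_at.
move=> t Ht.
rewrite /factor_at (nth_map 0%N) ?size_iota // nth_iota // add0n.
have Hlt : size p + t < size (F x' (size v)).
  by rewrite -F_factor -Hv' Hs !size_cat; lia.
rewrite -PoszD (KLpos Hlt) -F_factor -Hv' Hs nth_cat.
have -> : (size p + t < size p) = false by lia.
by rewrite addKn nth_cat Ht.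
Qed.

End Subst.

Definition blk (A : seq letter) := exists A', A = l1 :: A' /\ l1 \notin A'.

Lemma blk_nth A i : blk A -> 0 < i < size A -> nth l1 A i != l1.
Proof.
case=> A' [-> HA] /andP [Hi Hs].
have Hi' : i.-1 < size A' by rewrite -ltnS (prednK Hi).
rewrite -(prednK Hi) /=.
by apply/eqP => E; move: HA; rewrite -E mem_nth.
Qed.

Lemma MB_lt A B C D : blk B -> (exists z, C = l1 :: z) \/ C = [::] ->
  0 < size A -> size A < size B -> A ++ C = B ++ D -> False.
Proof.
move=> HB HC HA Hlt E.
have HC' : exists z, C = l1 :: z.
  case: HC E => // -> E; exfalso; move/(congr1 size): E; rewrite !size_cat /=; lia.
case: HC' => z Cz.
have := congr1 (fun L => nth l1 L (size A)) E => /=.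
rewrite nth_cat ltnn subnn Cz /= nth_cat Hlt => H.
by move: (blk_nth HB (i := size A)); rewrite HA Hlt -H eqxx => /(_ isT).
Qed.

Lemma MB A B C D : blk A -> blk B ->
  (exists z, C = l1 :: z) \/ C = [::] -> (exists z, D = l1 :: z) \/ D = [::] ->
  A ++ C = B ++ D -> A = B.
Proof.
move=> HA HB HC HD E.
have sA : 0 < size A by case: HA => A' [-> _].
have sB : 0 < size B by case: HB => A' [-> _].
case: (ltngtP (size A) (size B)) => H.
- by case: (MB_lt HB HC sA H E).
- by case: (MB_lt HA HD sB H (esym E)).
- by case: (cat_split H E).
Qed.

Section Marker.
Variable s : morph.
Hypothesis Hblk : forall a, blk (s a).
Hypothesis Hinj : injective s.

Lemma Hne a : 0 < size (s a).
Proof. by case: (Hblk a) => A' [-> _]. Qed.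

Lemma sigma_head v : (exists z, subst_word s v = l1 :: z) \/ subst_word s v = [::].
Proof.
case: v => [|a v]; first by right.
by left; case: (Hblk a) => A' [Ha _]; rewrite /subst_word /= Ha; eexists.
Qed.

Lemma parse v q z : subst_word s v = q ++ l1 :: z ->
  exists v1 v2, v = v1 ++ v2 /\ subst_word s v1 = q.
Proof.
elim: v q => [|x v IH] q.
  by case: q.
have [->|Hq] := altP (q =P [::]); first by move=> _; exists [::], (x :: v).
rewrite /subst_word [map _ _]/= [flatten _]/= -/(subst_word s v) => E.
have Hq0 : 0 < size q by case: q Hq {E}.
case: (ltnP (size q) (size (s x))) => H.
  have := congr1 (fun L => nth l1 L (size q)) E => /=.
  rewrite nth_cat H nth_cat ltnn subnn /= => H'.
  by move: (blk_nth (Hblk x) (i := size q)); rewrite H H' eqxx Hq0 => /(_ isT).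
move: E; rewrite -(cat_take_drop (size (s x)) q) -catA => E.
have [E1 E2] := cat_split (esym (size_takel H)) E.
case: (IH _ E2) => v1 [v2 [-> Hv1]].
exists (x :: v1), v2; split=> //.
by rewrite /subst_word /= -/(subst_word s v1) Hv1 {1}E1 cat_take_drop.
Qed.

Lemma cancel_w w v2 z : ((exists z', z = l1 :: z') \/ z = [::]) ->
  subst_word s v2 = subst_word s w ++ z -> exists v3, v2 = w ++ v3 /\ subst_word s v3 = z.
Proof.
move=> Hz; elim: w v2 => [|x w IH] v2 E; first by exists v2.
case: v2 E => [|y v2]; rewrite /subst_word /= -!/(subst_word s _).
  by case: (Hblk x) => A' [-> _].
rewrite -catA => E.
have Hxy := MB (Hblk y) (Hblk x) (sigma_head v2) _ E.
have {Hxy} Hxy : s y = s x.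
  apply: Hxy; case: (sigma_head w) => [[z' ->]|->]; first by left; eexists.
  by rewrite cat0s.
have Exy := Hinj Hxy; subst y.
have [_ E2] := cat_split erefl E.
case: (IH _ E2) => v3 [-> H3]; by exists v3.
Qed.

Variable X : subshift.
Notation Y := (image_shift s X).

Lemma S_parse pre w t : lang Y (pre ++ subst_word s w ++ l1 :: t) ->
  exists v1 v3 p r, [/\ lang X (v1 ++ w ++ v3), subst_word s v1 = p ++ pre &
                        subst_word s v3 = l1 :: t ++ r].
Proof.
move=> /(LY1 Hne) [v [Hv [p0 [r0 E]]]].
have [z Ez] : exists z, subst_word s w ++ l1 :: t ++ r0 = l1 :: z.
  by case: (sigma_head w) => [[z' ->]|->]; eexists.
have {}E : subst_word s v = (p0 ++ pre) ++ l1 :: z by rewrite E -Ez -!catA.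
case: (parse E) => v1 [v2 [Ev Hv1]].
move: E; rewrite Ev subst_cat Hv1 -Ez => E.
have [_ E2] := cat_split erefl E.
case: (cancel_w (or_introl (ex_intro _ (t ++ r0) erefl)) E2) => v3 [Ev2 H3].
exists v1, v3, p0, r0; split=> //; by rewrite -Ev2 -Ev.
Qed.

Lemma EdgeS pre w t : pre != [::] -> lang Y (pre ++ subst_word s w ++ l1 :: t) ->
  exists a b v1 v3 p r, [/\ lang X (a :: rcons w b), subst_word s v1 ++ s a = p ++ pre &
                         s b ++ subst_word s v3 = l1 :: t ++ r].
Proof.
move=> Hpre /S_parse [v1 [v3 [p [r [HX H1 H3]]]]].
case/lastP: v1 HX H1 => [|v1 a] HX H1.
  by move/(congr1 size): H1; rewrite size_cat /=; case: pre Hpre => //= *; lia.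
case: v3 HX H3 => [|b v3] HX H3; first by [].
exists a, b, v1, v3, p, r; split=> //.
- apply: (@lang_infix X v1 _ v3).
  by move: HX; rewrite -cats1 -!catA /= -cats1 -!catA.
- by rewrite -H1 -cats1 subst_cat /subst_word /= cats0.
Qed.

Hypothesis HS : forall x, X x <-> X (shift x).

Lemma EdgeC a w b pre t p' : lang X (a :: rcons w b) -> s a = p' ++ pre ->
  (forall e, exists r', s b ++ s e = l1 :: t ++ r') ->
  lang Y (pre ++ subst_word s w ++ l1 :: t).
Proof.
move=> /lang_ext_r [e He] Ha Hb; case: (Hb e) => r' Hr'.
apply: (LY2 Hne HS (p := p') (r := r') He).
have -> : subst_word s (a :: rcons (rcons w b) e) = s a ++ subst_word s w ++ (s b ++ s e).
  by rewrite -!cats1 /subst_word /= !map_cat !flatten_cat /= !cats0 !catA.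
by rewrite Hr' Ha -!catA.
Qed.

Lemma nth_sb b v3 i : 0 < i <= size (s b) ->
  nth l1 (s b ++ subst_word s v3) i = nth l1 (s b) i.
Proof.
move=> /andP [Hi Hs]; rewrite nth_cat.
case: (ltnP i (size (s b))) => // H.
have -> : i = size (s b) by lia.
rewrite subnn (nth_default _ (leqnn (size (s b)))).
by case: (sigma_head v3) => [[z ->]|->].
Qed.

Lemma last_sa v1 a p a' : subst_word s v1 ++ s a = p ++ [:: a'] -> a' = last l1 (s a).
Proof.
move/(congr1 (last l1)); rewrite !last_cat /=.
by case: (Hblk a) => A' [-> _] /= ->.
Qed.

End Marker.

Section Two.
Variable s : morph.
Hypothesis Hhd : forall a, exists A', s a = l1 :: A'.

Lemma Hne' a : 0 < size (s a).
Proof. by case: (Hhd a) => A' ->. Qed.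

Lemma two_fac v p c d r : subst_word s v = p ++ [:: c; d] ++ r ->
  (exists a i, [/\ i.+1 < size (s a), nth l1 (s a) i = c & nth l1 (s a) i.+1 = d]) \/
  (d = l1 /\ exists a, c = last l1 (s a)).
Proof.
elim: v p => [|x v IH] p; first by case: p.
rewrite /subst_word /= -/(subst_word s v) => E.
case: (ltnP (size p).+1 (size (s x))) => H1.
  left; exists x, (size p); split=> //.
    have := congr1 (fun L => nth l1 L (size p)) E => /=.
    by rewrite nth_cat (ltnW H1) nth_cat ltnn subnn.
  have := congr1 (fun L => nth l1 L (size p).+1) E => /=.
  by rewrite nth_cat H1 nth_cat ltnNge leqnSn /= subSnn.
case: (ltnP (size p) (size (s x))) => H2.
  have Hs : size (s x) = (size p).+1 by lia.
  move: E; rewrite -[_ :: d :: r]/([:: c] ++ d :: r) catA => E.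
  have Hsz : size (s x) = size (p ++ [:: c]) by rewrite size_cat addn1.
  have [E1 E2] := cat_split Hsz E.
  right; split.
    case: v IH E E2 => [|y v] _ _ //; rewrite /subst_word /=.
    by case: (Hhd y) => A' -> [].
  by exists x; rewrite E1 last_cat.
move: E; rewrite -(cat_take_drop (size (s x)) p) -catA => E.
have [E1 E2] := cat_split (esym (size_takel H2)) E.
exact: (IH _ E2).
Qed.

Lemma Y2 X c d : lang (image_shift s X) [:: c; d] ->
  (exists a i, [/\ i.+1 < size (s a), nth l1 (s a) i = c & nth l1 (s a) i.+1 = d]) \/
  (d = l1 /\ exists a, c = last l1 (s a)).
Proof.
move=> /(LY1 Hne') [v [_ [p [r E]]]]; exact: two_fac E.
Qed.

End Two.

Lemma conn_link_m Z w c a1 a2 : connected_in (ext_vert Z w) (ext_edge Z w) ->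
  a1 != c -> a2 != c -> a1 != a2 -> ext_vert Z w (inl a1) -> ext_vert Z w (inl a2) ->
  (forall b, E Z w a1 b -> E Z w a2 b -> False) -> exists b, E Z w c b /\ E Z w a1 b.
Proof.
move=> Hc h1 h2 h12 v1 v2 hd; apply: NNPP => Hn.
case: (Hc _ _ v1 v2) => p [Hw Hl].
pose S v := (v = inl a1) \/ (exists b, v = inr b /\ E Z w a1 b).
have key : forall p x, S x -> walk (ext_edge Z w) x p -> S (last x p).
  elim=> [|y q IH] x //= Sx [Exy Wq]; apply: IH Wq.
  move: Exy; case: Sx => [->|[b [-> Eb]]] Exy.
    by case: y Exy => // b Eb'; right; exists b.
  case: y Exy => // a Ea.
  case: (eqVneq a c) => [Hac|Nac].
    by subst; case: Hn; exists b.
  case: (letters3 h1 h2 h12 Nac) => Ha; first by left; rewrite Ha.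
  by rewrite Ha in Ea; case: (hd b Eb Ea).
have := key p _ (or_introl erefl) Hw; rewrite Hl.
case=> [[E12]|[b [//]]]; by rewrite E12 eqxx in h12.
Qed.

Lemma conn_link_p Z w c b1 b2 : connected_in (ext_vert Z w) (ext_edge Z w) ->
  b1 != c -> b2 != c -> b1 != b2 -> ext_vert Z w (inr b1) -> ext_vert Z w (inr b2) ->
  (forall a, E Z w a b1 -> E Z w a b2 -> False) -> exists a, E Z w a c /\ E Z w a b1.
Proof.
move=> Hc h1 h2 h12 v1 v2 hd; apply: NNPP => Hn.
case: (Hc _ _ v1 v2) => p [Hw Hl].
pose S v := (v = inr b1) \/ (exists a, v = inl a /\ E Z w a b1).
have key : forall p x, S x -> walk (ext_edge Z w) x p -> S (last x p).
  elim=> [|y q IH] x //= Sx [Exy Wq]; apply: IH Wq.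
  move: Exy; case: Sx => [->|[a [-> Ea]]] Exy.
    by case: y Exy => // a Ea'; right; exists a.
  case: y Exy => // b Eb.
  case: (eqVneq b c) => [Hbc|Nbc].
    by subst; case: Hn; exists a.
  case: (letters3 h1 h2 h12 Nbc) => Hb; first by left; rewrite Hb.
  by rewrite Hb in Eb; case: (hd a Ea Eb).
have := key p _ (or_introl erefl) Hw; rewrite Hl.
case=> [[E12]|[b [//]]]; by rewrite E12 eqxx in h12.
Qed.

Lemma lang_E_m Z w a b : E Z w a b -> lang Z (a :: w).
Proof. by rewrite /E -cats1 => /(@lang_pre Z (a :: w)). Qed.
Lemma lang_E_p Z w a b : E Z w a b -> lang Z (rcons w b).
Proof. by rewrite /E => /(@lang_suf Z [:: a]). Qed.
Lemma lang_E Z w a b : E Z w a b -> lang Z w.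
Proof. by move/lang_E_m/(@lang_suf Z [:: a]). Qed.

Lemma TM (X Y : subshift) w u c a1 a2 (f : letter -> letter) (Pb : letter -> Prop) :
  a1 != c -> a2 != c -> a1 != a2 ->
  (forall a b, E X w a b -> Pb b -> E Y u a (f b)) ->
  (forall a b', E Y u a b' -> exists b, [/\ E X w a b, Pb b & f b = b']) ->
  (forall b1 b2, E X w a1 b1 -> E X w a2 b2 -> Pb b1 -> Pb b2 -> f b1 = f b2 -> False) ->
  (exists b, E X w a1 b /\ Pb b) -> (exists b, E X w a2 b /\ Pb b) ->
  (exists b, E X w c b /\ Pb b) ->
  lang Y u /\ Cminus_w Y u c.
Proof.
move=> h1 h2 h12 HC HS Hsep [b1 [E1 P1]] [b2 [E2 P2]] [bc [Ec Pc]].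
split; first exact: lang_E (HC _ _ E1 P1).
split; first exact: lang_E_m (HC _ _ Ec Pc).
apply: (crit_minus h1 h2 h12); first by exists (f b1); apply: HC.
  by exists (f b2); apply: HC.
move=> b' /HS [x1 [F1 Q1 <-]] /HS [x2 [F2 Q2 H]].
exact: (Hsep _ _ F1 F2 Q1 Q2 (esym H)).
Qed.

Lemma TP (X Y : subshift) w u c b1 b2 (g : letter -> letter) (Pa : letter -> Prop) :
  b1 != c -> b2 != c -> b1 != b2 ->
  (forall a b, E X w a b -> Pa a -> E Y u (g a) b) ->
  (forall a' b, E Y u a' b -> exists a, [/\ E X w a b, Pa a & g a = a']) ->
  (forall a1 a2, E X w a1 b1 -> E X w a2 b2 -> Pa a1 -> Pa a2 -> g a1 = g a2 -> False) ->
  (exists a, E X w a b1 /\ Pa a) -> (exists a, E X w a b2 /\ Pa a) ->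
  (exists a, E X w a c /\ Pa a) ->
  lang Y u /\ Cplus_w Y u c.
Proof.
move=> h1 h2 h12 HC HS Hsep [a1 [E1 P1]] [a2 [E2 P2]] [ac [Ec Pc]].
split; first exact: lang_E (HC _ _ E1 P1).
split; first exact: lang_E_p (HC _ _ Ec Pc).
apply: (crit_plus h1 h2 h12); first by exists (g a1); apply: HC.
  by exists (g a2); apply: HC.
move=> a' /HS [x1 [F1 Q1 <-]] /HS [x2 [F2 Q2 H]].
exact: (Hsep _ _ F1 F2 Q1 Q2 (esym H)).
Qed.

Lemma all3 (P : letter -> Prop) : P l1 -> P l2 -> P l3 -> forall a, P a.
Proof.
move=> H1 H2 H3 [[|[|[|//]]] H].
- by have -> : Ordinal H = l1 by apply: val_inj.
- by have -> : Ordinal H = l2 by apply: val_inj.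
- by have -> : Ordinal H = l3 by apply: val_inj.
Qed.

Lemma pairs_beta X c d : lang (image_shift s_beta X) [:: c; d] ->
  (c, d) \in [:: (l1, l2); (l1, l3); (l3, l2); (l1, l1); (l2, l1)].
Proof.
have Hhd : forall a, exists A', s_beta a = l1 :: A' by apply: all3; eexists.
case/(Y2 Hhd) => [[a [i [Hi <- <-]]]|[-> [a ->]]].
  by move: a i Hi; apply: all3 => -[|[|[|i]]].
by move: a; apply: all3.
Qed.

Lemma nth_cons_nseq (x0 y : letter) k i : nth x0 (y :: nseq k y) i = nth x0 (nseq k.+1 y) i.
Proof. by []. Qed.

Lemma last_nseqS (x y : letter) k : last y (nseq k.+1 x) = x.
Proof. by elim: k. Qed.

Lemma pairs_delta k X c d : 0 < k -> lang (image_shift (s_delta k) X) [:: c; d] ->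
  (c, d) \in [:: (l1, l2); (l2, l3); (l3, l3); (l1, l1); (l3, l1)].
Proof.
move=> Hk.
have Hhd : forall a, exists A', s_delta k a = l1 :: A' by apply: all3; eexists.
case/(Y2 Hhd) => [[a [i [Hi <- <-]]]|[-> [a ->]]].
  move: a i Hi; apply: all3 => -[|[|i]] //= Hi; rewrite ?size_nseq in Hi;
    rewrite ?nth_cons_nseq ?nth_nseq; repeat (case: ifP => [?|/negbT ?]); try by []; exfalso; lia.
move: a; apply: all3 => //=; case: k Hk {Hhd} => // k _; by rewrite last_nseqS.
Qed.

Lemma pairs_zeta k X c d : 0 < k -> lang (image_shift (s_zeta k) X) [:: c; d] ->
  (c, d) \in [:: (l1, l3); (l3, l3); (l1, l2); (l3, l1); (l2, l1)].
Proof.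
move=> Hk.
have Hhd : forall a, exists A', s_zeta k a = l1 :: A' by apply: all3; eexists.
case/(Y2 Hhd) => [[a [i [Hi <- <-]]]|[-> [a ->]]].
  move: a i Hi; apply: all3 => -[|[|i]] //= Hi; rewrite ?size_nseq in Hi;
    rewrite ?nth_cons_nseq ?nth_nseq; repeat (case: ifP => [?|/negbT ?]); try by []; exfalso; lia.
move: a; apply: all3 => //=; case: k Hk {Hhd} => // k _; by rewrite last_nseqS.
Qed.

Lemma pairs_gamma X c d : lang (image_shift s_gamma X) [:: c; d] ->
  (c, d) \in [:: (l1, l2); (l2, l3); (l1, l1); (l2, l1); (l3, l1)].
Proof.
have Hhd : forall a, exists A', s_gamma a = l1 :: A' by apply: all3; eexists.
case/(Y2 Hhd) => [[a [i [Hi <- <-]]]|[-> [a ->]]].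
  by move: a i Hi; apply: all3 => -[|[|[|i]]].
by move: a; apply: all3.
Qed.

Lemma pairs_eta X c d : lang (image_shift s_eta X) [:: c; d] ->
  (c, d) \in [:: (l1, l3); (l1, l2); (l2, l3); (l3, l1); (l2, l1)].
Proof.
have Hhd : forall a, exists A', s_eta a = l1 :: A' by apply: all3; eexists.
case/(Y2 Hhd) => [[a [i [Hi <- <-]]]|[-> [a ->]]].
  by move: a i Hi; apply: all3 => -[|[|[|i]]].
by move: a; apply: all3.
Qed.

Lemma eps_m Y c a1 a2 : a1 != c -> a2 != c -> a1 != a2 -> lang Y [:: c] ->
  (exists b, lang Y [:: a1; b]) -> (exists b, lang Y [:: a2; b]) ->
  (forall d, lang Y [:: a1; d] -> lang Y [:: a2; d] -> False) -> Cminus_empty Y -> False.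
Proof.
move=> h1 h2 h12 Hc H1 H2 Hd HY.
apply: (HY [::] c); first exact: (@lang_pre Y [::] [:: c]).
by split=> //; apply: (crit_minus h1 h2 h12).
Qed.

Lemma eps_p Y c b1 b2 : b1 != c -> b2 != c -> b1 != b2 -> lang Y [:: c] ->
  (exists a, lang Y [:: a; b1]) -> (exists a, lang Y [:: a; b2]) ->
  (forall a, lang Y [:: a; b1] -> lang Y [:: a; b2] -> False) -> Cplus_empty Y -> False.
Proof.
move=> h1 h2 h12 Hc H1 H2 Hd HY.
apply: (HY [::] c); first exact: (@lang_pre Y [::] [:: c]).
by split=> //; apply: (crit_plus h1 h2 h12).
Qed.

Lemma subst2 (s : morph) a e : subst_word s [:: a; e] = s a ++ s e.
Proof. by rewrite /subst_word /= cats0. Qed.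
Lemma subst1 (s : morph) a : subst_word s [:: a] = s a.
Proof. by rewrite /subst_word /= cats0. Qed.

Section Contra.
Variable X : subshift.
Hypothesis HX : shift_space X.

Let HS : forall x, X x <-> X (shift x).
Proof. by case: HX. Qed.

Let Hext a : exists e, lang X [:: a; e].
Proof. by case: (lang_ext_r (lang_letter a HX)) => e He; exists e. Qed.

Lemma pres1 (s : morph) a p c r : (forall a, 0 < size (s a)) ->
  s a = p ++ [:: c] ++ r -> lang (image_shift s X) [:: c].
Proof.
move=> Hne E; apply: (LY2 Hne HS (lang_letter a HX) (p := p) (r := r)).
by rewrite subst1.
Qed.

Lemma pres2 (s : morph) a p c d r : (forall a, 0 < size (s a)) ->
  s a = p ++ [:: c; d] ++ r -> lang (image_shift s X) [:: c; d].
Proof.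
move=> Hne E; apply: (LY2 Hne HS (lang_letter a HX) (p := p) (r := r)).
by rewrite subst1.
Qed.

Lemma presB (s : morph) a p c : (forall a, 0 < size (s a)) ->
  (forall a, exists A', s a = l1 :: A') ->
  s a = p ++ [:: c] -> lang (image_shift s X) [:: c; l1].
Proof.
move=> Hne Hhd E; case: (Hext a) => e He; case: (Hhd e) => A' HA.
apply: (LY2 Hne HS He (p := p) (r := A')).
by rewrite subst2 E HA -catA.
Qed.

End Contra.

Section Contra2.
Variable X : subshift.
Hypothesis HX : shift_space X.

Lemma beta_left : Cminus_empty (image_shift s_beta X) -> False.
Proof.
have Hne : forall a, 0 < size (s_beta a) by apply: all3.
have Hhd : forall a, exists A', s_beta a = l1 :: A' by apply: all3; eexists.
apply: (@eps_m _ l1 l2 l3) => //.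
- exact: (@pres1 X HX s_beta l1 [::] l1 [::]).
- by exists l1; apply: (@presB X HX s_beta l2 [:: l1] l2).
- by exists l2; apply: (@pres2 X HX s_beta l3 [:: l1] l3 l2 [::]).
- by move=> d /pairs_beta H1 /pairs_beta H2; move: d H1 H2; apply: all3.
Qed.

Lemma gamma_right : Cplus_empty (image_shift s_gamma X) -> False.
Proof.
have Hne : forall a, 0 < size (s_gamma a) by apply: all3.
have Hhd : forall a, exists A', s_gamma a = l1 :: A' by apply: all3; eexists.
apply: (@eps_p _ l1 l2 l3) => //.
- exact: (@pres1 X HX s_gamma l1 [::] l1 [::]).
- by exists l1; apply: (@pres2 X HX s_gamma l2 [::] l1 l2 [::]).
- by exists l2; apply: (@pres2 X HX s_gamma l3 [:: l1] l2 l3 [::]).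
- by move=> d /pairs_gamma H1 /pairs_gamma H2; move: d H1 H2; apply: all3.
Qed.

Lemma eta_left : Cminus_empty (image_shift s_eta X) -> False.
Proof.
have Hne : forall a, 0 < size (s_eta a) by apply: all3.
have Hhd : forall a, exists A', s_eta a = l1 :: A' by apply: all3; eexists.
apply: (@eps_m _ l2 l1 l3) => //.
- exact: (@pres1 X HX s_eta l2 [:: l1] l2 [::]).
- by exists l3; apply: (@pres2 X HX s_eta l1 [::] l1 l3 [::]).
- by exists l1; apply: (@presB X HX s_eta l1 [:: l1] l3).
- by move=> d /pairs_eta H1 /pairs_eta H2; move: d H1 H2; apply: all3.
Qed.

Lemma eta_right : Cplus_empty (image_shift s_eta X) -> False.
Proof.
have Hne : forall a, 0 < size (s_eta a) by apply: all3.
have Hhd : forall a, exists A', s_eta a = l1 :: A' by apply: all3; eexists.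
apply: (@eps_p _ l3 l1 l2) => //.
- exact: (@pres1 X HX s_eta l1 [:: l1] l3 [::]).
- by exists l3; apply: (@presB X HX s_eta l1 [:: l1] l3).
- by exists l1; apply: (@pres2 X HX s_eta l2 [::] l1 l2 [::]).
- by move=> d /pairs_eta H1 /pairs_eta H2; move: d H1 H2; apply: all3.
Qed.

Variable k : nat.
Hypothesis Hk : 0 < k.

Lemma delta_left : Cminus_empty (image_shift (s_delta k) X) -> False.
Proof.
have Hne : forall a, 0 < size (s_delta k a) by apply: all3.
have Hhd : forall a, exists A', s_delta k a = l1 :: A' by apply: all3; eexists.
case: k Hk Hne Hhd => // k' _ Hne Hhd.
apply: (@eps_m _ l3 l1 l2) => //.
- exact: (@pres1 X HX (s_delta k'.+1) l3 [:: l1; l2] l3 (nseq k'.+1 l3)).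
- by exists l2; apply: (@pres2 X HX (s_delta k'.+1) l2 [::] l1 l2 (nseq k'.+1 l3)).
- by exists l3; apply: (@pres2 X HX (s_delta k'.+1) l2 [:: l1] l2 l3 (nseq k' l3)).
- by move=> d /(@pairs_delta k'.+1 X _ _ isT) H1 /(@pairs_delta k'.+1 X _ _ isT) H2; move: d H1 H2; apply: all3.
Qed.

Lemma delta_right : Cplus_empty (image_shift (s_delta k) X) -> False.
Proof.
have Hne : forall a, 0 < size (s_delta k a) by apply: all3.
have Hhd : forall a, exists A', s_delta k a = l1 :: A' by apply: all3; eexists.
case: k Hk Hne Hhd => // k' _ Hne Hhd.
apply: (@eps_p _ l1 l2 l3) => //.
- exact: (@pres1 X HX (s_delta k'.+1) l1 [::] l1 [::]).
- by exists l1; apply: (@pres2 X HX (s_delta k'.+1) l2 [::] l1 l2 (nseq k'.+1 l3)).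
- by exists l2; apply: (@pres2 X HX (s_delta k'.+1) l2 [:: l1] l2 l3 (nseq k' l3)).
- by move=> d /(@pairs_delta k'.+1 X _ _ isT) H1 /(@pairs_delta k'.+1 X _ _ isT) H2; move: d H1 H2; apply: all3.
Qed.

Lemma zeta_left : Cminus_empty (image_shift (s_zeta k) X) -> False.
Proof.
have Hne : forall a, 0 < size (s_zeta k a) by apply: all3.
have Hhd : forall a, exists A', s_zeta k a = l1 :: A' by apply: all3; eexists.
case: k Hk Hne Hhd => // k' _ Hne Hhd.
apply: (@eps_m _ l3 l1 l2) => //.
- exact: (@pres1 X HX (s_zeta k'.+1) l3 [:: l1] l3 (nseq k'.+1 l3)).
- by exists l2; apply: (@pres2 X HX (s_zeta k'.+1) l2 [::] l1 l2 [::]).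
- by exists l1; apply: (@presB X HX (s_zeta k'.+1) l2 [:: l1] l2).
- by move=> d /(@pairs_zeta k'.+1 X _ _ isT) H1 /(@pairs_zeta k'.+1 X _ _ isT) H2; move: d H1 H2; apply: all3.
Qed.

Lemma zeta_right : Cplus_empty (image_shift (s_zeta k) X) -> False.
Proof.
have Hne : forall a, 0 < size (s_zeta k a) by apply: all3.
have Hhd : forall a, exists A', s_zeta k a = l1 :: A' by apply: all3; eexists.
case: k Hk Hne Hhd => // k' _ Hne Hhd.
apply: (@eps_p _ l3 l1 l2) => //.
- exact: (@pres1 X HX (s_zeta k'.+1) l3 [:: l1] l3 (nseq k'.+1 l3)).
- by exists l2; apply: (@presB X HX (s_zeta k'.+1) l2 [:: l1] l2).
- by exists l1; apply: (@pres2 X HX (s_zeta k'.+1) l2 [::] l1 l2 [::]).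
- by move=> d /(@pairs_zeta k'.+1 X _ _ isT) H1 /(@pairs_zeta k'.+1 X _ _ isT) H2; move: d H1 H2; apply: all3.
Qed.

End Contra2.

Section Transfer.
Variable s : morph.
Hypothesis Hblk : forall a, blk (s a).
Hypothesis Hinj : injective s.
Variable X : subshift.
Hypothesis HS : forall x, X x <-> X (shift x).
Notation Y := (image_shift s X).
Notation sw := (subst_word s).
Let Hne1 b : 0 < size (s b) := Hne Hblk b.

Lemma eqU w a' b' : a' :: rcons (sw w ++ [:: l1]) b' = [:: a'] ++ sw w ++ l1 :: [:: b'].
Proof. by rewrite rcons_cat. Qed.

Lemma eqU2 w a' b' : a' :: rcons (sw w ++ [:: l1; l2]) b' = [:: a'] ++ sw w ++ l1 :: [:: l2; b'].
Proof. by rewrite rcons_cat. Qed.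

Lemma eqU3 w a' b' : a' :: rcons ([:: l2] ++ sw w ++ [:: l1]) b' = [:: a'; l2] ++ sw w ++ l1 :: [:: b'].
Proof. by rewrite /= rcons_cat. Qed.

Lemma split_last a : exists p', s a = p' ++ [:: last l1 (s a)].
Proof.
case: (Hblk a) => A' [-> _]; exists (belast l1 A').
by rewrite cats1 -lastI.
Qed.

Lemma CompU w a b : E X w a b -> E Y (sw w ++ [:: l1]) (last l1 (s a)) (nth l1 (s b) 1).
Proof.
move=> H; rewrite /E eqU; case: (split_last a) => p' Hp.
apply: (EdgeC Hblk HS H Hp) => e.
case: (Hblk b) => [[|x B'] [-> _]] /=.
  by case: (Hblk e) => E' [-> _]; exists E'.
by exists (B' ++ s e).
Qed.

Lemma SoundU w a' b' : E Y (sw w ++ [:: l1]) a' b' ->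
  exists a b, [/\ E X w a b, a' = last l1 (s a) & b' = nth l1 (s b) 1].
Proof.
rewrite /E eqU => /(EdgeS Hblk Hinj) [//|a [b [v1 [v3 [p [r [HX H1 H3]]]]]]].
exists a, b; split=> //; first exact: (last_sa Hblk H1).
have := congr1 (fun L => nth l1 L 1) H3 => /=.
rewrite nth_sb /= ?Hne1 // => ->.
Qed.

Lemma CompU2 w a b : E X w a b -> nth l1 (s b) 1 = l2 ->
  E Y (sw w ++ [:: l1; l2]) (last l1 (s a)) (nth l1 (s b) 2).
Proof.
move=> H Hb; rewrite /E eqU2; case: (split_last a) => p' Hp.
apply: (EdgeC Hblk HS H Hp) => e.
move: Hb; case: (Hblk b) => [[|x [|y B']] [-> _]] //= ->.
  by case: (Hblk e) => E' [-> _]; exists E'.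
by exists (B' ++ s e).
Qed.

Lemma SoundU2 w a' b' : E Y (sw w ++ [:: l1; l2]) a' b' ->
  exists a b, [/\ E X w a b, a' = last l1 (s a), nth l1 (s b) 1 = l2 & b' = nth l1 (s b) 2].
Proof.
rewrite /E eqU2 => /(EdgeS Hblk Hinj) [//|a [b [v1 [v3 [p [r [HX H1 H3]]]]]]].
exists a, b.
have N1 : nth l1 (s b) 1 = l2.
  have := congr1 (fun L => nth l1 L 1) H3 => /=.
  by rewrite nth_sb /= ?Hne1 // => ->.
split=> //; first exact: (last_sa Hblk H1).
have S2 : 1 < size (s b) by move: N1; case: (Hblk b) => [[|x B'] [-> _]].
have := congr1 (fun L => nth l1 L 2) H3 => /=.
by rewrite nth_sb /= ?S2 // => ->.
Qed.

Lemma right1 b e : exists r', s b ++ s e = l1 :: [:: nth l1 (s b) 1] ++ r'.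
Proof.
case: (Hblk b) => [[|x B'] [-> _]] /=.
  by case: (Hblk e) => E' [-> _]; exists E'.
by exists (B' ++ s e).
Qed.

Lemma CompU3 w a b a'' p' : E X w a b -> s a = p' ++ [:: a''; l2] ->
  E Y ([:: l2] ++ sw w ++ [:: l1]) a'' (nth l1 (s b) 1).
Proof.
move=> H Hp; rewrite /E eqU3.
apply: (EdgeC Hblk HS H Hp) => e; exact: right1.
Qed.

Lemma SoundU3 w a' b' : E Y ([:: l2] ++ sw w ++ [:: l1]) a' b' ->
  exists a b v1 q, [/\ E X w a b, sw v1 ++ s a = q ++ [:: a'; l2] & b' = nth l1 (s b) 1].
Proof.
rewrite /E eqU3 => /(EdgeS Hblk Hinj) [//|a [b [v1 [v3 [p [r [HX H1 H3]]]]]]].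
exists a, b, v1, p; split=> //.
have := congr1 (fun L => nth l1 L 1) H3 => /=.
by rewrite nth_sb /= ?Hne1 // => ->.
Qed.

Lemma ext_c_m w c : lang X (c :: w) -> exists b, E X w c b.
Proof. by case/lang_ext_r => b H; exists b. Qed.

Lemma ext_c_p w c : lang X (rcons w c) -> exists a, E X w a c.
Proof. by case/lang_ext_l => a H; exists a. Qed.

Lemma minus_simple : (forall a, last l1 (s a) = a) ->
  (forall b b', nth l1 (s b) 1 = nth l1 (s b') 1 -> b = b') ->
  Cminus_empty Y -> Cminus_empty X.
Proof.
move=> Hl Hf HY w c Hw [Hv Hd].
case: (crit_minus_inv Hd) => a1 [a2 [h1 h2 h12 [[b1 E1] [b2 E2]] Hdis]].
case: (ext_c_m Hv) => bc Ec.
have [Hu HC] : lang Y (sw w ++ [:: l1]) /\ Cminus_w Y (sw w ++ [:: l1]) c.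
  apply: (@TM X Y w (sw w ++ [:: l1]) c a1 a2 (fun b => nth l1 (s b) 1) (fun _ => True) h1 h2 h12).
- by move=> a b Hab _; have := CompU Hab; rewrite Hl.
- move=> a b' /SoundU [a0 [b [H Ha ->]]]; exists b; split=> //.
  by rewrite Ha Hl.
- by move=> x1 x2 F1 F2 _ _ /Hf Ex; subst; apply: (Hdis x2).
- by exists b1.
- by exists b2.
- by exists bc.
exact: (HY _ _ Hu HC).
Qed.

Lemma plus_simple : (forall b, nth l1 (s b) 1 = b) ->
  (forall a a', last l1 (s a) = last l1 (s a') -> a = a') ->
  Cplus_empty Y -> Cplus_empty X.
Proof.
move=> Hn Hg HY w c Hw [Hv Hd].
case: (crit_plus_inv Hd) => b1 [b2 [h1 h2 h12 [[a1 E1] [a2 E2]] Hdis]].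
case: (ext_c_p Hv) => ac Ec.
have [Hu HC] : lang Y (sw w ++ [:: l1]) /\ Cplus_w Y (sw w ++ [:: l1]) c.
  apply: (@TP X Y w (sw w ++ [:: l1]) c b1 b2 (fun a => last l1 (s a)) (fun _ => True) h1 h2 h12).
- by move=> a b Hab _; have := CompU Hab; rewrite Hn.
- move=> a' b /SoundU [a [b0 [H -> Hb]]]; rewrite Hn in Hb; subst b0.
  by exists a; split.
- by move=> x1 x2 F1 F2 _ _ /Hg Ex; subst; apply: (Hdis x2).
- by exists a1.
- by exists a2.
- by exists ac.
exact: (HY _ _ Hu HC).
Qed.

Lemma minus_case : (forall w, lang X w -> connected_in (ext_vert X w) (ext_edge X w)) ->
  (forall a, last l1 (s a) = a) -> nth l1 (s l1) 1 = l1 ->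
  (forall b, b != l1 -> nth l1 (s b) 1 = l2) ->
  (forall b b', b != l1 -> b' != l1 -> nth l1 (s b) 2 = nth l1 (s b') 2 -> b = b') ->
  Cminus_empty Y -> Cminus_empty X.
Proof.
move=> Hconn Hl H11 H1 H2 HY w c Hw [Hv Hd].
case: (crit_minus_inv Hd) => a1 [a2 [h1 h2 h12 [[b1 E1] [b2 E2]] Hdis]].
have f1l1 : forall b, nth l1 (s b) 1 = l1 -> b = l1.
  by move=> b; case: (eqVneq b l1) => // /H1 ->.
case: (classic ((exists x1, E X w a1 x1 /\ x1 != l1) /\ (exists x2, E X w a2 x2 /\ x2 != l1)))
  => [[[x1 [F1 N1]] [x2 [F2 N2]]] | Hn].
  have exc : exists b, E X w c b /\ b != l1.
    have v1 : ext_vert X w (inl a1) := lang_E_m E1.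
    have v2 : ext_vert X w (inl a2) := lang_E_m E2.
    have h21 : a2 != a1 by rewrite eq_sym.
    case: (conn_link_m (Hconn w Hw) h1 h2 h12 v1 v2 Hdis) => y [Ey Ey1].
    have Hdis' : forall b, E X w a2 b -> E X w a1 b -> False by move=> b A B; exact: (Hdis b B A).
    case: (conn_link_m (Hconn w Hw) h2 h1 h21 v2 v1 Hdis') => y' [Ey' Ey2].
    case: (eqVneq y l1) => [Hy|Hy]; last by exists y.
    exists y'; split => //; apply/eqP => Hy'; subst y y'; exact: (Hdis l1 Ey1 Ey2).
  have [Hu HC] : lang Y (sw w ++ [:: l1; l2]) /\ Cminus_w Y (sw w ++ [:: l1; l2]) c.
    apply: (@TM X Y w _ c a1 a2 (fun b => nth l1 (s b) 2) (fun b => b != l1) h1 h2 h12).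
    - by move=> a b Hab Nb; have := CompU2 Hab (H1 _ Nb); rewrite Hl.
    - move=> a b' /SoundU2 [a0 [b [H Ha Hb ->]]]; rewrite Hl in Ha; subst a0.
      exists b; split=> //; apply/eqP => Eb; move: Hb; by rewrite Eb H11.
    - by move=> y1 y2 F1' F2' N1' N2' /(H2 _ _ N1' N2') Ey; subst; exact: (Hdis _ F1' F2').
    - by exists x1.
    - by exists x2.
    - exact: exc.
  exact: (HY _ _ Hu HC).
have Hc1 : (forall x, E X w a1 x -> x = l1) \/ (forall x, E X w a2 x -> x = l1).
  apply: NNPP => Hn'; apply: Hn; split.
    apply: NNPP => Hx; apply: Hn'; left => x Ex; apply: NNPP => Nx; apply: Hx.
    by exists x; split=> //; apply/eqP.
  apply: NNPP => Hx; apply: Hn'; right => x Ex; apply: NNPP => Nx; apply: Hx.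
  by exists x; split=> //; apply/eqP.
case: (ext_c_m Hv) => bc Ec.
have [Hu HC] : lang Y (sw w ++ [:: l1]) /\ Cminus_w Y (sw w ++ [:: l1]) c.
  apply: (@TM X Y w _ c a1 a2 (fun b => nth l1 (s b) 1) (fun _ => True) h1 h2 h12).
  - by move=> a b Hab _; have := CompU Hab; rewrite Hl.
  - move=> a b' /SoundU [a0 [b [H Ha ->]]]; exists b; split=> //.
    by rewrite Ha Hl.
  - move=> y1 y2 F1' F2' _ _ Ef; case: Hc1 => Hc.
      have Ey1 := Hc _ F1'; subst y1; rewrite H11 in Ef.
      have Ey2 := f1l1 _ (esym Ef); subst y2; exact: (Hdis _ F1' F2').
    have Ey2 := Hc _ F2'; subst y2; rewrite H11 in Ef.
    have Ey1 := f1l1 _ Ef; subst y1; exact: (Hdis _ F1' F2').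
  - by exists b1.
  - by exists b2.
  - by exists bc.
exact: (HY _ _ Hu HC).
Qed.

Lemma plus_case (G3 : letter -> letter) :
  (forall w, lang X w -> connected_in (ext_vert X w) (ext_edge X w)) ->
  (forall b, nth l1 (s b) 1 = b) -> last l1 (s l1) = l1 ->
  (forall a, a != l1 -> last l1 (s a) = l2) ->
  (forall a, a != l1 -> exists p', s a = p' ++ [:: G3 a; l2]) ->
  (forall v1 q a a', sw v1 ++ s a = q ++ [:: a'; l2] -> a != l1 /\ a' = G3 a) ->
  (forall a a', a != l1 -> a' != l1 -> G3 a = G3 a' -> a = a') ->
  Cplus_empty Y -> Cplus_empty X.
Proof.
move=> Hconn Hn H11 H1 H3c H3s H3i HY w c Hw [Hv Hd].
case: (crit_plus_inv Hd) => b1 [b2 [h1 h2 h12 [[a1 E1] [a2 E2]] Hdis]].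
have g1l1 : forall a, last l1 (s a) = l1 -> a = l1.
  by move=> a; case: (eqVneq a l1) => // /H1 ->.
case: (classic ((exists x1, E X w x1 b1 /\ x1 != l1) /\ (exists x2, E X w x2 b2 /\ x2 != l1)))
  => [[[x1 [F1 N1]] [x2 [F2 N2]]] | Hnn].
  have exc : exists a, E X w a c /\ a != l1.
    have v1 : ext_vert X w (inr b1) := lang_E_p E1.
    have v2 : ext_vert X w (inr b2) := lang_E_p E2.
    have h21 : b2 != b1 by rewrite eq_sym.
    case: (conn_link_p (Hconn w Hw) h1 h2 h12 v1 v2 Hdis) => y [Ey Ey1].
    have Hdis' : forall a, E X w a b2 -> E X w a b1 -> False by move=> a A B; exact: (Hdis a B A).
    case: (conn_link_p (Hconn w Hw) h2 h1 h21 v2 v1 Hdis') => y' [Ey' Ey2].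
    case: (eqVneq y l1) => [Hy|Hy]; last by exists y.
    exists y'; split => //; apply/eqP => Hy'; subst y y'; exact: (Hdis l1 Ey1 Ey2).
  have [Hu HC] : lang Y ([:: l2] ++ sw w ++ [:: l1]) /\ Cplus_w Y ([:: l2] ++ sw w ++ [:: l1]) c.
    apply: (@TP X Y w _ c b1 b2 G3 (fun a => a != l1) h1 h2 h12).
    - move=> a b Hab Na; case: (H3c _ Na) => p' Hp.
      by have := CompU3 Hab Hp; rewrite Hn.
    - move=> a' b /SoundU3 [a [b0 [v1 [q [H Hq Hb]]]]]; rewrite Hn in Hb; subst b0.
      by case: (H3s _ _ _ _ Hq) => Na ->; exists a; split.
    - by move=> y1 y2 F1' F2' N1' N2' /(H3i _ _ N1' N2') Ey; subst; exact: (Hdis _ F1' F2').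
    - by exists x1.
    - by exists x2.
    - exact: exc.
  exact: (HY _ _ Hu HC).
have Hc1 : (forall x, E X w x b1 -> x = l1) \/ (forall x, E X w x b2 -> x = l1).
  apply: NNPP => Hn'; apply: Hnn; split.
    apply: NNPP => Hx; apply: Hn'; left => x Ex; apply: NNPP => Nx; apply: Hx.
    by exists x; split=> //; apply/eqP.
  apply: NNPP => Hx; apply: Hn'; right => x Ex; apply: NNPP => Nx; apply: Hx.
  by exists x; split=> //; apply/eqP.
case: (ext_c_p Hv) => ac Ec.
have [Hu HC] : lang Y (sw w ++ [:: l1]) /\ Cplus_w Y (sw w ++ [:: l1]) c.
  apply: (@TP X Y w _ c b1 b2 (fun a => last l1 (s a)) (fun _ => True) h1 h2 h12).
  - by move=> a b Hab _; have := CompU Hab; rewrite Hn.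
  - move=> a' b /SoundU [a [b0 [H -> Hb]]]; rewrite Hn in Hb; subst b0.
    by exists a; split.
  - move=> y1 y2 F1' F2' _ _ Ef; case: Hc1 => Hc.
      have Ey1 := Hc _ F1'; subst y1; rewrite H11 in Ef.
      have Ey2 := g1l1 _ (esym Ef); subst y2; exact: (Hdis _ F1' F2').
    have Ey2 := Hc _ F2'; subst y2; rewrite H11 in Ef.
    have Ey1 := g1l1 _ Ef; subst y1; exact: (Hdis _ F1' F2').
  - by exists a1.
  - by exists a2.
  - by exists ac.
exact: (HY _ _ Hu HC).
Qed.

End Transfer.

Lemma blk_alpha a : blk (s_alpha a).
Proof. by move: a; apply: all3; eexists; split. Qed.
Lemma blk_beta a : blk (s_beta a).
Proof. by move: a; apply: all3; eexists; split. Qed.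
Lemma blk_gamma a : blk (s_gamma a).
Proof. by move: a; apply: all3; eexists; split. Qed.

Lemma inj_alpha : injective s_alpha.
Proof. by move=> a b; move: a b; apply: all3; apply: all3. Qed.
Lemma inj_beta : injective s_beta.
Proof. by move=> a b; move: a b; apply: all3; apply: all3. Qed.
Lemma inj_gamma : injective s_gamma.
Proof. by move=> a b; move: a b; apply: all3; apply: all3. Qed.

Lemma inv_of (s : morph) (F : seq letter -> seq letter -> seq letter) L :
  (forall a1 a2, a1 != a2 -> F (s a1) (s a2) = L) ->
  forall a1 a2 b1 b2 : letter, a1 != a2 -> b1 != b2 -> F (s a1) (s a2) = F (s b1) (s b2).
Proof. by move=> H a1 a2 b1 b2 h1 h2; rewrite !H. Qed.

Lemma li_alpha : left_invariant s_alpha.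
Proof. apply: (@inv_of _ _ [::]) => a1 a2; move: a1 a2; by apply: all3; apply: all3. Qed.
Lemma li_gamma : left_invariant s_gamma.
Proof. apply: (@inv_of _ _ [::]) => a1 a2; move: a1 a2; by apply: all3; apply: all3. Qed.
Lemma ri_alpha : right_invariant s_alpha.
Proof. apply: (@inv_of _ _ [:: l1]) => a1 a2; move: a1 a2; by apply: all3; apply: all3. Qed.
Lemma ri_beta : right_invariant s_beta.
Proof. apply: (@inv_of _ _ [:: l1]) => a1 a2; move: a1 a2; by apply: all3; apply: all3. Qed.

Definition G3b (a : letter) : letter := if a == l2 then l1 else l3.

Lemma H3s_beta v1 q a a' : subst_word s_beta v1 ++ s_beta a = q ++ [:: a'; l2] ->
  a != l1 /\ a' = G3b a.
Proof.
move: a; apply: all3 => /(congr1 rev); rewrite !rev_cat /rev /=.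
- by case.
- by case=> <-.
- by case=> <-.
Qed.

Unset Implicit Arguments.

Theorem corollary5p9 (X : subshift) (s : morph) :
  shift_space X -> dendric_shift X -> DP X s ->
  (Cminus_empty (image_shift s X) -> Cminus_empty X /\ left_invariant s) /\
  (Cplus_empty (image_shift s X) -> Cplus_empty X /\ right_invariant s).
Proof.
move=> HX HD [HS3 _].
have HS : forall x, X x <-> X (shift x) by case: HX.
have Hconn : forall w, lang X w -> connected_in (ext_vert X w) (ext_edge X w).
  by move=> w Hw; case: (HD w Hw).
case: HS3 => [H|[H|[H|[H|[[k [Hk H]]|[k [Hk H]]]]]]];
  have {H} -> := functional_extensionality _ _ H.
- split=> HY; split.
  + apply: (minus_simple blk_alpha inj_alpha HS) HY; first by apply: all3.
    by apply: all3; apply: all3.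
  + exact: li_alpha.
  + apply: (plus_simple blk_alpha inj_alpha HS) HY; first by apply: all3.
    by apply: all3; apply: all3.
  + exact: ri_alpha.
- split=> HY; first by case: (beta_left HX HY).
  split; last exact: ri_beta.
  apply: (@plus_case s_beta blk_beta inj_beta X HS G3b Hconn) HY.
  + by apply: all3.
  + by [].
  + by apply: all3.
  + apply: all3 => //= _; first by exists [::].
    by exists [:: l1].
  + exact: H3s_beta.
  + by apply: all3; apply: all3.
- split=> HY; last by case: (gamma_right HX HY).
  split; last exact: li_gamma.
  apply: (minus_case blk_gamma inj_gamma HS Hconn) HY.
  + by apply: all3.
  + by [].
  + by apply: all3.
  + by apply: all3; apply: all3.
- by split=> HY; [case: (eta_left HX HY) | case: (eta_right HX HY)].
- by split=> HY; [case: (delta_left HX Hk HY) | case: (delta_right HX Hk HY)].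
- by split=> HY; [case: (zeta_left HX Hk HY) | case: (zeta_right HX Hk HY)].
Qed.
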